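(* Let $M,N,K$ be positive integers, let $Y_0\in\mathbb{R}^{K\times N}$, and let $f_1,\dots,f_N\ge 0$ be real numbers. Let $A\in\{0,1\}^{M\times N}$ be a matrix each of whose columns contains exactly one entry equal to $1$ (all other entries $0$). For $i=1,\dots,M$ let $C_i=\{j\in\{1,\dots,N\}: A_{ij}=1\}$, and assume that $S_i:=\sum_{k\in C_i} f_k>0$ for every $i$ (in particular every $C_i$ is nonempty). Let $\mathcal{B}$ be the set of matrices $B\in\mathbb{R}^{N\times M}$ whose columns $v_1,\dots,v_M$ satisfy $v_i[j]=0$ for all $j\notin C_i$. Define, for $B\in\mathcal{B}$, $$\Phi(B)=\sum_{j=1}^{N} f_j\,\bigl\|Y_0\,(BA-I_N)\,e_j\bigr\|_2^2 ,$$ where $e_j$ is the $j$-th standard basis vector of $\mathbb{R}^N$. Then the matrix $B^*\in\mathcal{B}$ with columns $$v_i^*[j]=\begin{cases}\dfrac{f_j}{\sum_{k\in C_i} f_k}, & j\in C_i,\\[2mm] 0, & j\notin C_i,\end{cases}\qquad i=1,\dots,M,$$ is a global minimizer of $\Phi$ over $\mathcal{B}$, i.e. $\Phi(B^* )\le \Phi(B)$ for all $B\in\mathcal{B}$.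
   Context: In the paper's notation the objective is written $Y_0((BA-I_N)\mathrm{QF})\times[f_1,\dots,f_N]^\top$, where $Y_0(X)\,\mathrm{QF}$ denotes the vector whose $j$-th entry is $\|Y_0 x_j\|_2^2$ for $x_j$ the $j$-th column of $X$; this is exactly $\Phi(B)$ above. Interpretation (not needed for the claim): $N$ experts are merged into $M$ clusters, $A$ assigns each expert to a cluster, $f_j$ is the usage frequency of expert $j$, and $B$ holds the merging weights. *)

(* Defs.v *)
From mathcomp Require Import all_boot all_order all_algebra.
Set Implicit Arguments. Unset Strict Implicit. Unset Printing Implicit Defensive.
Import Order.TTheory GRing.Theory Num.Theory.
Local Open Scope ring_scope.

Definition cluster {R : ringType} {M N : nat} (A : 'M[R]_(M, N)) (i : 'I_M)
  : {set 'I_N} := [set j | A i j == 1].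

Definition in_calB {R : ringType} {M N : nat} (A : 'M[R]_(M, N))
  (B : 'M[R]_(N, M)) : Prop :=
  forall (i : 'I_M) (j : 'I_N), j \notin cluster A i -> B j i = 0.

Definition sqnorm {R : ringType} {K : nat} (x : 'cV[R]_K) : R :=
  \sum_(k < K) (x k 0) ^+ 2.

Definition e_vec {R : ringType} {N : nat} (j : 'I_N) : 'cV[R]_N :=
  \col_(k < N) (if k == j then 1 else 0).

Definition Phi {R : ringType} {M N K : nat} (Y0 : 'M[R]_(K, N))
  (A : 'M[R]_(M, N)) (f : 'I_N -> R) (B : 'M[R]_(N, M)) : R :=
  \sum_(j < N) f j * sqnorm (Y0 *m (B *m A - 1%:M) *m e_vec j).

Definition Bstar {R : fieldType} {M N : nat} (A : 'M[R]_(M, N)) (f : 'I_N -> R)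
  : 'M[R]_(N, M) :=
  \matrix_(j < N, i < M)
    (if j \in cluster A i then f j / (\sum_(k in cluster A i) f k) else 0).

(* Main.v *)
Require Import Defs.
From mathcomp Require Import all_boot all_order all_algebra.
From mathcomp Require Import ring.
Import Order.TTheory GRing.Theory Num.Theory.
Local Open Scope ring_scope.

Lemma mulA_c (R : ringType) m M N (A : 'M[R]_(M,N)) (c : 'I_N -> 'I_M)
  (hc : forall i j, A i j = (i == c j)%:R) (W : 'M[R]_(m,M)) k j :
  (W *m A) k j = W k (c j).
Proof.
rewrite mxE (bigD1 (c j)) //= hc eqxx mulr1 big1 ?addr0 // => i /negbTE ne.
by rewrite hc ne mulr0.
Qed.

Lemma mule (R : ringType) m N (X : 'M[R]_(m,N)) j k : (X *m e_vec j) k 0 = X k j.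
Proof.
rewrite mxE (bigD1 j) //= mxE eqxx mulr1 big1 ?addr0 // => l /negbTE ne.
by rewrite mxE ne mulr0.
Qed.

Lemma core (R : realFieldType) M N K (c : 'I_N -> 'I_M) (f : 'I_N -> R)
  (hf : forall j, 0 <= f j) (Y0 : 'M[R]_(K,N))
  (hS : forall i, \sum_(j | c j == i) f j != 0) (W : 'M[R]_(K,M)) :
  \sum_j f j * \sum_k ((\matrix_(k, i) ((\sum_(j | c j == i) f j * Y0 k j) / \sum_(j | c j == i) f j) : 'M[R]_(K,M)) k (c j) - Y0 k j)^+2 <= \sum_j f j * \sum_k (W k (c j) - Y0 k j)^+2.
Proof.
set Ws := \matrix_(k, i) _.
have cross : forall k, \sum_j f j * ((W k (c j) - Ws k (c j)) * (Ws k (c j) - Y0 k j)) = 0.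
  move=> k; rewrite (partition_big c xpredT) //=; apply: big1 => i _.
  rewrite (eq_bigr (fun j => (W k i - Ws k i) * (f j * (Ws k i - Y0 k j)))); last first.
    by move=> j /eqP <-; rewrite mulrCA.
  rewrite -mulr_sumr; apply/eqP; rewrite mulf_eq0; apply/orP; right.
  rewrite (eq_bigr (fun j => Ws k i * f j - f j * Y0 k j)); last first.
    by move=> j _; rewrite mulrBr mulrC.
  by rewrite sumrB -mulr_sumr /Ws mxE divfK ?hS // subrr.
rewrite -subr_ge0 -sumrB.
rewrite (eq_bigr (fun j => \sum_k (f j * (W k (c j) - Ws k (c j))^+2 +
   2 * (f j * ((W k (c j) - Ws k (c j)) * (Ws k (c j) - Y0 k j)))))); last first.
  move=> j _; rewrite -mulrBr -sumrB mulr_sumr; apply: eq_bigr => k _; ring.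
rewrite exchange_big /=; apply: sumr_ge0 => k _.
rewrite big_split /= -mulr_sumr cross mulr0 addr0.
by apply: sumr_ge0 => j _; apply: mulr_ge0 => //; apply: sqr_ge0.
Qed.

Theorem theorem1 (R : realFieldType) (M N K : nat)
  (hM : (0 < M)%N) (hN : (0 < N)%N) (hK : (0 < K)%N)
  (Y0 : 'M[R]_(K, N)) (f : 'I_N -> R) (hf : forall j, 0 <= f j)
  (A : 'M[R]_(M, N))
  (hA01 : forall i j, A i j = 0 \/ A i j = 1)
  (hAcol : forall j : 'I_N, #|[set i : 'I_M | A i j == 1]| = 1%N)
  (hS : forall i : 'I_M, 0 < \sum_(k in cluster A i) f k) :
  in_calB A (Bstar A f) /\
  (forall B : 'M[R]_(N, M), in_calB A B -> Phi Y0 A f (Bstar A f) <= Phi Y0 A f B).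
Proof.
split.
  by move=> i j hj; rewrite mxE (negbTE hj).
have : forall j, exists x, forall i, (A i j == 1) = (i == x).
  move=> j; have /eqP/cards1P [x hx] := hAcol j.
  by exists x => i; rewrite -in_set1 -hx inE.
case/fin_all_exists => c hcx.
have hc : forall i j, A i j = (i == c j)%:R.
  move=> i j; have e := hcx j i.
  case: (hA01 i j) => h; rewrite h -e h.
    by rewrite eq_sym oner_eq0.
  by rewrite eqxx.
have hcl : forall i j, (j \in cluster A i) = (c j == i).
  by move=> i j; rewrite /cluster inE hcx eq_sym.
have hSS : forall i, \sum_(k in cluster A i) f k = \sum_(k | c k == i) f k.
  by move=> i; apply: eq_bigl => l; rewrite hcl.
have PhiE : forall B : 'M[R]_(N, M), Phi Y0 A f B =
    \sum_j f j * \sum_k ((Y0 *m B) k (c j) - Y0 k j)^+2.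
  move=> B; apply: eq_bigr => j _; congr (_ * _); apply: eq_bigr => k _.
  by rewrite mule mulmxBr mulmx1 mulmxA mxE (@mulA_c _ _ _ _ A c hc) [(- Y0) k j]mxE.
move=> B _.
rewrite !PhiE.
have hS' : forall i, \sum_(j | c j == i) f j != 0.
  by move=> i; rewrite -hSS; apply: lt0r_neq0.
have -> : Y0 *m Bstar A f = \matrix_(k, i) ((\sum_(j | c j == i) f j * Y0 k j) / \sum_(j | c j == i) f j).
  apply/matrixP => k i; rewrite !mxE.
  under eq_bigr => l _ do rewrite mxE.
  rewrite hSS.
  rewrite (big_mkcond (fun j => c j == i) (fun j => f j * Y0 k j)) mulr_suml; apply: eq_bigr => l _.
  rewrite hcl; case: ifP => _; last by rewrite mulr0 mul0r.
  by rewrite mulrA [Y0 k l * f l]mulrC.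
exact: core.
Qed.
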